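(* Let $\mathcal{Q}$ be a poset and let $M,N$ be finitely encoded persistence modules over $\mathcal{Q}$. Then there exist a finite poset $\mathcal P$, an order-preserving map $e\colon\mathcal{Q}\to\mathcal P$, pointwise finite-dimensional modules $M'',N''\colon\mathcal P\to\mathrm{Vect}$ and isomorphisms $M\cong e^*M''$ and $N\cong e^*N''$. Furthermore, if $M$ and $N$ both admit finite encodings of class $\mathfrak X$ for an algebra $\mathfrak X$ on $\mathcal{Q}$, then $e$ can be chosen so that all its fibers belong to $\mathfrak X$.
   Context: $\mathrm{Vect}$ is the category of finite-dimensional vector spaces over a field; a persistence module over $\mathcal{Q}$ is a functor $\mathcal{Q}\to\mathrm{Vect}$. A finite encoding of $M$ is an order-preserving map $e\colon\mathcal{Q}\to\mathcal P$ with $\mathcal P$ a finite poset, a pointwise finite-dimensional $M'\colon\mathcal P\to\mathrm{Vect}$ and an isomorphism $M\cong e^*M'=M'\circ e$; $M$ is finitely encoded if it admits one. An algebra on $\mathcal{Q}$ is a family of subsets containing $\emptyset$, closed under complements and finite unions; the encoding is of class $\mathfrak X$ if every fiber $e^{-1}(p)$ belongs to $\mathfrak X$. *)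

(* Defs.v *)
From HB Require Import structures.
From mathcomp Require Import all_boot all_order all_algebra.
Set Implicit Arguments. Unset Strict Implicit. Unset Printing Implicit Defensive.
Import Order.TTheory GRing.Theory.
Local Open Scope order_scope.

(* A persistence module over a poset Q with values in finite-dimensional
   K-vector spaces: a functor Q -> Vect (vectType K is finite-dimensional). *)
Record pmod (K : fieldType) (dQ : Order.disp_t) (Q : porderType dQ) := PMod {
  pm_sp : Q -> vectType K;
  pm_map : forall x y : Q, x <= y -> 'Hom(pm_sp x, pm_sp y);
  pm_id : forall (x : Q) (h : x <= x), pm_map h = \1%VF;
  pm_comp : forall (x y z : Q) (hxy : x <= y) (hyz : y <= z) (hxz : x <= z),
      pm_map hxz = (pm_map hyz \o pm_map hxy)%VF
}.

Definition monotone (dQ dP : Order.disp_t) (Q : porderType dQ) (P : porderType dP)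
  (e : Q -> P) := forall x y : Q, x <= y -> e x <= e y.

Section Pullback.
Variables (K : fieldType) (dQ dP : Order.disp_t) (Q : porderType dQ) (P : porderType dP).
Variables (e : Q -> P) (he : monotone e) (M : pmod K P).

Definition pull_sp (q : Q) : vectType K := pm_sp M (e q).
Definition pull_map (x y : Q) (h : x <= y) : 'Hom(pull_sp x, pull_sp y) :=
  pm_map M (he h).
Lemma pull_id (x : Q) (h : x <= x) : pull_map h = \1%VF.
Proof. exact: pm_id. Qed.
Lemma pull_comp (x y z : Q) (hxy : x <= y) (hyz : y <= z) (hxz : x <= z) :
  pull_map hxz = (pull_map hyz \o pull_map hxy)%VF.
Proof. exact: pm_comp. Qed.
Definition pullback : pmod K Q := PMod pull_id pull_comp.
End Pullback.

Definition pm_iso (K : fieldType) (dQ : Order.disp_t) (Q : porderType dQ)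
  (M N : pmod K Q) : Prop :=
  exists (f : forall q, 'Hom(pm_sp M q, pm_sp N q))
         (g : forall q, 'Hom(pm_sp N q, pm_sp M q)),
    (forall q, (g q \o f q)%VF = \1%VF /\ (f q \o g q)%VF = \1%VF) /\
    (forall (x y : Q) (h : x <= y),
        (f y \o pm_map M h)%VF = (pm_map N h \o f x)%VF).

Definition finitely_encoded (K : fieldType) (dQ : Order.disp_t) (Q : porderType dQ)
  (M : pmod K Q) : Prop :=
  exists (dP : Order.disp_t) (P : finPOrderType dP) (e : Q -> P) (he : monotone e)
         (M' : pmod K P), pm_iso M (pullback he M').

Definition is_algebra (Q : Type) (X : (Q -> Prop) -> Prop) : Prop :=
  X (fun _ => False) /\
  (forall A, X A -> X (fun q => ~ A q)) /\
  (forall A B, X A -> X B -> X (fun q => A q \/ B q)).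

Definition fibers_in (Q P : Type) (X : (Q -> Prop) -> Prop) (e : Q -> P) : Prop :=
  forall p : P, X (fun q => e q = p).

Definition finitely_encoded_class (K : fieldType) (dQ : Order.disp_t)
  (Q : porderType dQ) (X : (Q -> Prop) -> Prop) (M : pmod K Q) : Prop :=
  exists (dP : Order.disp_t) (P : finPOrderType dP) (e : Q -> P) (he : monotone e)
         (M' : pmod K P), fibers_in X e /\ pm_iso M (pullback he M').

(* Main.v *)
Require Import Defs.
From mathcomp Require Import all_boot all_order all_algebra.
From Stdlib Require Import FunctionalExtensionality PropExtensionality Classical.
Set Implicit Arguments. Unset Strict Implicit.
Import Order.TTheory.
Local Open Scope order_scope.

Section Aux.
Variables (K : fieldType) (dQ : Order.disp_t) (Q : porderType dQ).

Lemma transfer (M : pmod K Q) dP (P : porderType dP) dP1 (P1 : porderType dP1)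
  (e : Q -> P) (he : monotone e) (pi : P -> P1) (hpi : monotone pi)
  (he1 : monotone (fun q => pi (e q))) (M' : pmod K P1) :
  pm_iso M (pullback he1 M') -> pm_iso M (pullback he (pullback hpi M')).
Proof.
case=> f [g [Hfg Hnat]]; exists f, g; split => // x y h.
have -> : (pm_map (pullback he (pullback hpi M')) h) = pm_map (pullback he1 M') h.
  by rewrite /= /pull_map /= /pull_map (bool_irrelevance (hpi _ _ (he x y h)) (he1 x y h)).
exact: Hnat.
Qed.

Variables (dP1 dP2 : Order.disp_t) (P1 : finPOrderType dP1) (P2 : finPOrderType dP2).
Variables (e1 : Q -> P1) (e2 : Q -> P2) (he1 : monotone e1) (he2 : monotone e2).

Definition epair (q : Q) : P1 *p P2 := (e1 q, e2 q).
Lemma epair_mono : monotone epair.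
Proof. by move=> x y h; rewrite leEprod /= he1 ?he2. Qed.
Lemma fst_mono : monotone (fun p : P1 *p P2 => p.1).
Proof. by move=> x y; rewrite leEprod => /andP[]. Qed.
Lemma snd_mono : monotone (fun p : P1 *p P2 => p.2).
Proof. by move=> x y; rewrite leEprod => /andP[]. Qed.

Lemma combine (M N : pmod K Q) (M' : pmod K P1) (N' : pmod K P2) :
  pm_iso M (pullback he1 M') -> pm_iso N (pullback he2 N') ->
  pm_iso M (pullback epair_mono (pullback fst_mono M')) /\
  pm_iso N (pullback epair_mono (pullback snd_mono N')).
Proof.
move=> HM HN; split.
- exact: (@transfer M _ _ _ _ epair epair_mono _ fst_mono he1 M' HM).
- exact: (@transfer N _ _ _ _ epair epair_mono _ snd_mono he2 N' HN).
Qed.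

Lemma fibers_pair (X : (Q -> Prop) -> Prop) : is_algebra X ->
  fibers_in X e1 -> fibers_in X e2 -> fibers_in X epair.
Proof.
move=> [_ [HC HU]] F1 F2 [p1 p2].
have := HC _ (HU _ _ (HC _ (F1 p1)) (HC _ (F2 p2))).
congr X; apply: functional_extensionality => q.
apply: propositional_extensionality; rewrite /epair; split.
- move=> H; have h1 : e1 q = p1 by apply: NNPP => n; apply: H; left.
  have h2 : e2 q = p2 by apply: NNPP => n; apply: H; right.
  by rewrite h1 h2.
- by case=> -> -> [].
Qed.
End Aux.

Theorem mainTheorem19 (K : fieldType) (dQ : Order.disp_t) (Q : porderType dQ)
  (M N : pmod K Q) :
  finitely_encoded M -> finitely_encoded N ->
  (exists (dP : Order.disp_t) (P : finPOrderType dP) (e : Q -> P)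
          (he : monotone e) (M'' N'' : pmod K P),
      pm_iso M (pullback he M'') /\ pm_iso N (pullback he N'')) /\
  (forall X : (Q -> Prop) -> Prop, is_algebra X ->
     finitely_encoded_class X M -> finitely_encoded_class X N ->
     exists (dP : Order.disp_t) (P : finPOrderType dP) (e : Q -> P)
            (he : monotone e) (M'' N'' : pmod K P),
       fibers_in X e /\
       pm_iso M (pullback he M'') /\ pm_iso N (pullback he N'')).
Proof.
move=> [d1 [P1 [e1 [he1 [M' HM]]]]] [d2 [P2 [e2 [he2 [N' HN]]]]]; split.
  have [A B] := combine HM HN.
  by do 6 eexists; split; [exact: A | exact: B].
move=> X HX [c1 [R1 [f1 [hf1 [M1 [F1 HM1]]]]]] [c2 [R2 [f2 [hf2 [N1 [F2 HN1]]]]]].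
have [A B] := combine HM1 HN1.
do 6 eexists; split; last by split; [exact: A | exact: B].
exact: fibers_pair.
Qed.
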